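(* Let $G=(V,E)$ be a finite connected graph with $|V|>2$, let $h(u)\in\mathbb{N}_0^V$ be the height process of the independent particle dropping model (at each step a site $i$ is chosen with probability $p(i)>0$ and $h$ is replaced by $T_ih$), and let $x_j(u)=h_j(u)-\max_kh_k(u)$. Then for every $u$, $$\max_jh_j(u+1)=\max_jh_j(u)\iff\#\{j\in V:x_j(u)\neq x_j(u+1)\}=1.$$
   Context: For $h\in\mathbb{N}_0^V$ and $i\in V$: $(T_ih)_i=\max\{h_k:\operatorname{dist}(k,i)\le1\}+1$ and $(T_ih)_j=h_j$ for $j\neq i$, where dist is the graph distance in $G$. *)

(* Defs.v *)
From mathcomp Require Import all_boot all_order all_algebra.
Set Implicit Arguments. Unset Strict Implicit. Unset Printing Implicit Defensive.

Definition simple_graph (T : finType) (e : rel T) : Prop :=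
  symmetric e /\ irreflexive e.

Definition connected_graph (T : finType) (e : rel T) : Prop :=
  forall x y : T, connect e x y.

Definition dist_le1 (T : finType) (e : rel T) (k i : T) : bool :=
  (k == i) || e k i.

Definition Tstep (T : finType) (e : rel T) (i : T) (h : T -> nat) : T -> nat :=
  fun j => if j == i then (\max_(k | dist_le1 e k i) h k).+1 else h j.

Definition maxh (T : finType) (h : T -> nat) : nat := \max_(k : T) h k.

Fixpoint heights (T : finType) (e : rel T) (h0 : T -> nat) (s : nat -> T)
    (u : nat) : T -> nat :=
  match u with
  | 0 => h0
  | u'.+1 => Tstep e (s u') (heights e h0 s u')
  end.

Definition xrel (T : finType) (h : T -> nat) (j : T) : int :=
  (h j)%:Z - (maxh h)%:Z.

(* Main.v *)
Require Import Defs.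
From mathcomp Require Import all_boot all_order all_algebra.
From mathcomp Require Import zify.

Lemma maxh_T (T : finType) (e : rel T) (i : T) (h : T -> nat) :
  maxh (Tstep e i h) = maxn (maxh h) (\max_(k | dist_le1 e k i) h k).+1.
Proof.
rewrite /maxh (bigD1 i) //= (bigD1 i (P := xpredT)) //=.
rewrite /Tstep eqxx.
have -> : \max_(k | k != i) (if k == i then (\max_(k0 | dist_le1 e k0 i) h k0).+1 else h k)
   = \max_(k | k != i) h k.
  by apply: eq_bigr => k /negbTE ->.
have hi : h i <= \max_(k | dist_le1 e k i) h k.
  by apply: (leq_bigmax_cond (F := h)); rewrite /dist_le1 eqxx.
lia.
Qed.

Lemma m_le_M (T : finType) (e : rel T) (i : T) (h : T -> nat) :
  \max_(k | dist_le1 e k i) h k <= maxh h.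
Proof. by apply/bigmax_leqP => k _; apply: leq_bigmax. Qed.

Theorem mainTheorem7 (T : finType) (e : rel T) (p : T -> rat)
  (Hsimple : simple_graph e) (Hconn : connected_graph e) (Hcard : 2 < #|T|)
  (Hp : forall i, (0 < p i)%R) (Hp1 : (\sum_(i : T) p i)%R = 1%R)
  (h0 : T -> nat) (s : nat -> T) (u : nat) :
  maxh (heights e h0 s u.+1) = maxh (heights e h0 s u) <->
  #|[set j : T | xrel (heights e h0 s u) j != xrel (heights e h0 s u.+1) j]| = 1.
Proof.
rewrite /=.
set h := heights e h0 s u; set i := s u.
have HM := @maxh_T _ e i h.
have Hm := @m_le_M _ e i h.
have hi : h i <= \max_(k | dist_le1 e k i) h k.
  by apply: (leq_bigmax_cond (F := h)); rewrite /dist_le1 eqxx.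
set m := \max_(k | dist_le1 e k i) h k in HM Hm hi.
rewrite HM.
have [lt|ge] := ltnP m (maxh h).
- have -> : maxn (maxh h) m.+1 = maxh h by lia.
  split => // _.
  suff -> : [set j | xrel h j != xrel (Tstep e i h) j] = [set i] by rewrite cards1.
  apply/setP => j.
  rewrite !inE /xrel HM /Tstep.
  have -> : maxn (maxh h) m.+1 = maxh h by lia.
  case: (eqVneq j i) => [->|nji]; last by rewrite eqxx.
  rewrite -/m; apply/eqP; lia.
- have Em : m = maxh h by lia.
  have -> : maxn (maxh h) m.+1 = (maxh h).+1 by lia.
  split => [|H]; first lia.
  exfalso.
  have : #|[set~ i]| <= 1.
    rewrite -H; apply: subset_leq_card; apply/subsetP => j.
    rewrite !inE /xrel HM /Tstep => /negbTE ->.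
    have -> : maxn (maxh h) m.+1 = (maxh h).+1 by lia.
    apply/eqP; lia.
  rewrite cardsC1; lia.
Qed.
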